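(* Let $S_1$ and $S_2$ be disjoint alphabets, let $A_1$ be a set of factorizations on $S_1$ and $A_2$ a set of factorizations on $S_2$, and let $w$ be a weight on $A_1 * A_2$ which is also a weight on $A_1$ and on $A_2$. Then, whenever the Laguerre series involved are well-defined, \[ f_{A_1*A_2,w}(t) = f_{A_1,w}(t)\cdot f_{A_2,w}(t). \]
   Context: A word on an alphabet $S$ is a finite sequence of letters of $S$; a subword is a consecutive block of letters. A factorization on $S$ is an ordered list $(\phi_1)\cdots(\phi_k)$ of nonempty words on $S$ (its parts); $\mathrm{parts}(\phi)=k$. The empty factorization (no parts) is written $\emptyset$. For $T\subseteq S$, the restriction $\phi|_T$ is the factorization whose parts are the maximal subwords of parts of $\phi$ using only letters of $T$, ordered by occurrence in $\phi$ ($\emptyset$ if there are none). For disjoint alphabets $S_1,S_2$ and sets $A_1,A_2$ of factorizations on them, $A_1*A_2$ is the set of factorizations $\phi$ on $S_1\cup S_2$ with $\phi|_{S_1}\in A_1$ and $\phi|_{S_2}\in A_2$. A weight on a set $A$ of factorizations on $S$ is a function $w$ from $A$ and all restrictions of elements of $A$ into a polynomial ring $\mathbb{R}[x_1,x_2,\ldots]$ with $w(\phi)=w(\phi|_T)\,w(\phi|_{S\setminus T})$ for all $\phi\in A$, $T\subseteq S$. The polynomials $l_k(t)$ are defined by $\sum_{k\ge0}l_k(t)x^k=e^{tx/(1+x)}$. The Laguerre series of $A$ with respect to $w$ is $f_{A,w}(t)=\sum_{\phi\in A}w(\phi)\,l_{\mathrm{parts}(\phi)}(t)$, when well-defined as a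 formal power series. *)

(* Defs.v *)
From HB Require Import structures.
From mathcomp Require Import all_boot all_order all_algebra.
From mathcomp Require Import mathcomp_extra boolp classical_sets functions.
From mathcomp Require Import cardinality fsbigop reals.
From mathcomp Require Import finmap multiset.

Set Implicit Arguments.
Unset Strict Implicit.
Unset Printing Implicit Defensive.
Import Order.TTheory GRing.Theory Num.Theory.
Local Open Scope classical_set_scope.
Local Open Scope ring_scope.

Definition is_fact_on (L : choiceType) (S : set L) (phi : seq (seq L)) : Prop :=
  (forall u, u \in phi -> u != [::]) /\
  (forall u, u \in phi -> forall a, a \in u -> S a).

(* [blocks T u]: the maximal (possibly empty) blocks of letters of T in u,
   separated by the letters of u not in T, in order. *)
Fixpoint blocks (L : choiceType) (T : set L) (u : seq L) : seq (seq L) :=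
  match u with
  | [::] => [:: [::]]
  | a :: u' =>
      let p := blocks T u' in
      if a \in T then (a :: head [::] p) :: behead p else [::] :: p
  end.

Definition runs (L : choiceType) (T : set L) (u : seq L) : seq (seq L) :=
  [seq v <- blocks T u | v != [::]].

Definition restr (L : choiceType) (T : set L) (phi : seq (seq L))
  : seq (seq L) := flatten [seq runs T u | u <- phi].

Definition parts (L : Type) (phi : seq (seq L)) : nat := size phi.

Definition fstar (L : choiceType) (S1 S2 : set L)
    (A1 A2 : set (seq (seq L))) : set (seq (seq L)) :=
  [set phi | is_fact_on (S1 `|` S2) phi /\ A1 (restr S1 phi)
                                        /\ A2 (restr S2 phi)].

(* A monomial in the countably many variables x_i (i : nat) is a finite
   multiset of variable indices; the product of monomials is multiset sum. *)
Definition mono := multiset nat.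

(* an element of R[x_0, x_1, ...] or R[[x_0, x_1, ...]] is given by its
   coefficient function; it is a polynomial iff its support is finite *)
Definition is_xpoly (R : realType) (p : mono -> R) : Prop :=
  finite_set [set m | p m != 0].

(* product (Cauchy product; each monomial has finitely many factorizations) *)
Definition xmul (R : realType) (p q : mono -> R) : mono -> R :=
  fun m => \sum_(ab \in [set ab : mono * mono | msetD ab.1 ab.2 = m])
             p ab.1 * q ab.2.

Definition is_weight (R : realType) (L : choiceType) (S : set L)
    (A : set (seq (seq L))) (w : seq (seq L) -> mono -> R) : Prop :=
  forall phi, A phi ->
    is_xpoly (w phi) /\
    forall T : set L, T `<=` S ->
      [/\ is_xpoly (w (restr T phi)), is_xpoly (w (restr (S `\` T) phi)) &
          w phi = xmul (w (restr T phi)) (w (restr (S `\` T) phi))].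

(* sum_k l_k(t) x^k = e^{t x/(1+x)} = sum_n t^n (x/(1+x))^n / n!, hence
   [t^n] l_k = [x^k] (x/(1+x))^n / n!.  Modulo x^(k+1), x/(1+x) agrees with
   its truncation xg k = sum_{1<=i<=k} (-1)^(i-1) x^i, and [t^n] l_k = 0 for
   n > k (as (x/(1+x))^n has valuation n). *)
Definition xg (R : realType) (k : nat) : {poly R} :=
  \sum_(1 <= i < k.+1) ((-1) ^+ i.+1) *: 'X^i.

Definition laguerre (R : realType) (k : nat) : {poly R} :=
  \poly_(n < k.+1) (((xg R k) ^+ n)`_k / (n`!)%:R).

(* a power series in t and the x_i: coefficient of t^j x^m is  f j m *)

Definition lag_term (R : realType) (L : choiceType)
    (w : seq (seq L) -> mono -> R) (phi : seq (seq L)) : nat -> mono -> R :=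
  fun j m => w phi m * (laguerre R (parts phi))`_j.

Definition lag_wd (R : realType) (L : choiceType) (A : set (seq (seq L)))
    (w : seq (seq L) -> mono -> R) : Prop :=
  forall j m, finite_set (A `&` [set phi | lag_term w phi j m != 0]).

(* f_{A,w}(t) (meaningful when lag_wd A w) *)
Definition lag_series (R : realType) (L : choiceType) (A : set (seq (seq L)))
    (w : seq (seq L) -> mono -> R) : nat -> mono -> R :=
  fun j m => \sum_(phi \in A) lag_term w phi j m.

Definition smul (R : realType) (f g : nat -> mono -> R) : nat -> mono -> R :=
  fun j m => \sum_(i < j.+1)
     \sum_(ab \in [set ab : mono * mono | msetD ab.1 ab.2 = m])
        f i ab.1 * g (j - i)%N ab.2.

(* Main.v *)
Require Import Defs.
From HB Require Import structures.
From mathcomp Require Import all_boot all_order all_algebra.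
From mathcomp Require Import mathcomp_extra boolp classical_sets functions.
From mathcomp Require Import cardinality fsbigop reals.
From mathcomp Require Import finmap multiset.
From mathcomp Require Import ring.
Set Implicit Arguments.
Unset Strict Implicit.
Unset Printing Implicit Defensive.

Module M0.
Import Order.TTheory GRing.Theory Num.Theory.
Local Open Scope ring_scope.

Section Lag.
Variable R : realType.

Definition aa (n r : nat) : R := ((xg R n) ^+ r)`_n.

Lemma xg0 : xg R 0 = 0.
Proof. by rewrite /xg big_geq. Qed.
Lemma xgS n : xg R n.+1 = xg R n + (-1) ^+ n.+2 *: 'X^(n.+1).
Proof. by rewrite /xg big_nat_recr. Qed.
Lemma xg_rec n : xg R n.+1 = 'X * (1 - xg R n).
Proof.
elim: n => [|n IH].
  by rewrite xgS xg0 add0r subr0 mulr1 expr2 mulrNN mulr1 scale1r expr1.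
rewrite xgS [in RHS]xgS opprD addrA mulrDr -IH; congr (_ + _).
rewrite mulrN -scalerAr -exprS [in RHS]exprS mulN1r scaleNr.
by rewrite opprK 2!exprS !mulN1r opprK.
Qed.

Lemma coef_agree (p q r : {poly R}) n :
  (forall i, (i <= n)%N -> p`_i = q`_i) -> forall i, (i <= n)%N -> (p * r)`_i = (q * r)`_i.
Proof.
move=> H i lein; rewrite !coefM; apply: eq_bigr => k _; rewrite H //.
by rewrite -ltnS (leq_trans (ltn_ord k)) // ltnS.
Qed.

Lemma pow_agree (p q : {poly R}) n r :
  (forall i, (i <= n)%N -> p`_i = q`_i) -> forall i, (i <= n)%N -> (p ^+ r)`_i = (q ^+ r)`_i.
Proof.
move=> H; elim: r => [|r IH] i lein; first by [].
rewrite !exprS (coef_agree (p ^+ r) H) // mulrC [q * _]mulrC.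
exact: (coef_agree q IH).
Qed.

Lemma xg_agree n : forall i, (i <= n)%N -> (xg R n.+1)`_i = (xg R n)`_i.
Proof.
move=> i lein; rewrite xgS coefD coefZ coefXn.
have -> : (i == n.+1) = false by apply: ltn_eqF; rewrite ltnS.
by rewrite mulr0 addr0.
Qed.

Lemma aa0r r : aa 0 r = (r == 0)%:R.
Proof. by rewrite /aa xg0; case: r => [|r]; rewrite ?expr0 ?coef1 // expr0n coef0. Qed.

Lemma aaS0 n : aa n.+1 0 = 0.
Proof. by rewrite /aa expr0 coef1. Qed.

Lemma aaSS n r : aa n.+1 r.+1 = aa n r - aa n r.+1.
Proof.
rewrite /aa exprSr {2}xg_rec mulrCA coefXM /= mulrBr mulr1 coefB.
congr (_ - _).
  by rewrite (pow_agree r (@xg_agree n)).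
have -> : ((xg R n.+1 ^+ r * xg R n)`_n = (xg R n.+1 ^+ r * xg R n.+1)`_n).
  rewrite (mulrC _ (xg R n)) (mulrC _ (xg R n.+1)); apply: (coef_agree _ (n:=n)) => // i lei.
  by rewrite xg_agree.
by rewrite -exprSr (pow_agree r.+1 (@xg_agree n)).
Qed.

Lemma aa_gt n r : (n < r)%N -> aa n r = 0.
Proof.
elim: n r => [|n IH] [|r] //.
  by move=> _; rewrite aa0r.
rewrite ltnS => H; rewrite aaSS !IH ?subrr //; exact: ltnW.
Qed.

Lemma coef_lag n r : (laguerre R n)`_r = aa n r / (r`!)%:R.
Proof.
rewrite /laguerre coef_poly; case: ltnP => // H.
by rewrite aa_gt ?mul0r.
Qed.

End Lag.

End M0.
Import M0.

Module M1.
Import GRing.Theory.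

Section Enum.
Variable L : choiceType.
Notation fac := (seq (seq L)).

Definition glue (a : seq L) (psi : fac) : fac :=
  if psi is w :: psi' then (a ++ w) :: psi' else [::].

Fixpoint enumT (p1 p2 : fac) {struct p1} : (seq fac * seq fac) * seq fac :=
 match p1 with
 | [::] => (fix T0 (p2 : fac) :=
     match p2 with
     | [::] => (([:: [::]], [::]), [::])
     | b :: p2' => let t := T0 p2' in
        let g2 := map (cons b) t.1.1 ++ map (glue b) t.1.2 in ((g2, [::]), g2)
     end) p2
 | a :: p1' => (fix Ta (p2 : fac) :=
     let t1 := enumT p1' p2 in
     let g1 := map (cons a) t1.1.1 ++ map (glue a) t1.2 in
     match p2 with
     | [::] => ((g1, g1), [::])
     | b :: p2' => let t := Ta p2' in
        let g2 := map (cons b) t.1.1 ++ map (glue b) t.1.2 in ((g1 ++ g2, g1), g2)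
     end) p2
 end.

Definition FF p1 p2 := (enumT p1 p2).1.1.
Definition G1 p1 p2 := (enumT p1 p2).1.2.
Definition G2 p1 p2 := (enumT p1 p2).2.

Lemma G1_nil p2 : G1 [::] p2 = [::].
Proof. by case: p2. Qed.
Lemma G1_cons a p1 p2 :
  G1 (a :: p1) p2 = map (cons a) (FF p1 p2) ++ map (glue a) (G2 p1 p2).
Proof. by case: p2. Qed.
Lemma G2_nil p1 : G2 p1 [::] = [::].
Proof. by case: p1. Qed.
Lemma G2_cons p1 b p2 :
  G2 p1 (b :: p2) = map (cons b) (FF p1 p2) ++ map (glue b) (G1 p1 p2).
Proof. by case: p1 => [|a p1]; case: p2. Qed.
Lemma FF_eq p1 p2 : FF p1 p2 =
  (if p1 is [::] then if p2 is [::] then [:: [::]] else [::] else [::])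
   ++ G1 p1 p2 ++ G2 p1 p2.
Proof.
case: p1 => [|a p1]; case: p2 => [|b p2] //=.
by rewrite G2_nil cats0.
Qed.

End Enum.

End M1.
Import M1.

Module M2.
Import GRing.Theory Num.Theory.
Local Open Scope ring_scope.

Section LagSum.
Variable R : realType.
Variable L : choiceType.
Notation fac := (seq (seq L)).
Notation aa := (aa R).

Lemma size_glue (a : seq L) psi : size (glue a psi) = size psi.
Proof. by case: psi. Qed.

Lemma G_nonnil n : forall (p1 p2 : fac), (size p1 + size p2 <= n)%N ->
  (forall phi, phi \in G1 p1 p2 -> phi != [::]) /\
  (forall phi, phi \in G2 p1 p2 -> phi != [::]).
Proof.
elim: n => [|n IH] p1 p2.
  by case: p1 => [|? ?]; case: p2 => [|? ?] //= _; rewrite G1_nil G2_nil.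
move=> Hs; split.
  case: p1 Hs => [|a p1] Hs phi; first by rewrite G1_nil.
  rewrite G1_cons mem_cat => /orP[/mapP[x _ ->]//|/mapP[x Hx ->]].
  have Hs' : (size p1 + size p2 <= n)%N by move: Hs; rewrite /= addSn.
  have [_ H2] := IH p1 p2 Hs'.
  by case: x Hx => [|w x] // /H2.
case: p2 Hs => [|b p2] Hs phi; first by rewrite G2_nil.
rewrite G2_cons mem_cat => /orP[/mapP[x _ ->]//|/mapP[x Hx ->]].
have Hs' : (size p1 + size p2 <= n)%N by move: Hs; rewrite /= addnS.
have [H1 _] := IH p1 p2 Hs'.
by case: x Hx => [|w x] // /H1.
Qed.

Definition PP (r k m : nat) : R :=
  \sum_(i < r.+1) ('C(r, i))%:R * aa k i * aa m (r - i)%N.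

Lemma fs0 (p1 p2 : fac) :
  \sum_(phi <- FF p1 p2) aa (size phi) 0 = PP 0 (size p1) (size p2).
Proof.
have [H1 H2] := G_nonnil (leqnn (size p1 + size p2)).
rewrite /PP big_ord1 bin0 mul1r subnn FF_eq !big_cat /=.
rewrite [X in _ + (X + _)]big_seq [X in _ + (_ + X)]big_seq.
rewrite [X in _ + (X + _)]big1; last by move=> phi /H1; case: phi => // ? ? _; rewrite aaS0.
rewrite [X in _ + (_ + X)]big1; last by move=> phi /H2; case: phi => // ? ? _; rewrite aaS0.
rewrite !addr0.
case: p1 {H1 H2} => [|a p1]; case: p2 => [|b p2] /=;
  rewrite ?big_nil ?big_cons ?big_nil ?aaS0 ?aa0r ?mulr0 ?mul0r //=.
by rewrite addr0 mulr1.
Qed.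

Lemma fsS r (p1 p2 : fac) :
  \sum_(phi <- FF p1 p2) aa (size phi) r.+1 =
  \sum_(phi <- G1 p1 p2) aa (size phi) r.+1 +
  \sum_(phi <- G2 p1 p2) aa (size phi) r.+1.
Proof.
rewrite FF_eq !big_cat /=.
by case: p1 => [|a p1]; case: p2 => [|b p2]; rewrite /= ?big_nil ?big_cons ?big_nil ?aa0r ?add0r ?addr0.
Qed.


Lemma pascal_sum (f g : nat -> R) r :
  \sum_(i < r.+2) ('C(r.+1, i))%:R * f i * g (r.+1 - i)%N =
  \sum_(i < r.+1) ('C(r, i))%:R * f i.+1 * g (r - i)%N +
  \sum_(i < r.+1) ('C(r, i))%:R * f i * g (r - i)%N.+1.
Proof.
have E1 : \sum_(i < r.+2) ('C(r.+1, i))%:R * f i * g (r.+1 - i)%N =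
  f 0%N * g r.+1 + \sum_(i < r.+1) ('C(r, i))%:R * f i.+1 * g (r - i)%N +
  \sum_(i < r.+1) ('C(r, i.+1))%:R * f i.+1 * g (r - i)%N.
  rewrite big_ord_recl /= bin0 subn0 mul1r -addrA; congr (_ + _).
  rewrite -big_split /=; apply: eq_bigr => i _.
  by rewrite (_ : bump 0 i = i.+1) // binS natrD !mulrDl subSS addrC.
have E2 : \sum_(i < r.+1) ('C(r, i))%:R * f i * g (r - i)%N.+1 =
  f 0%N * g r.+1 + \sum_(i < r) ('C(r, i.+1))%:R * f i.+1 * g (r - i.+1)%N.+1.
  by rewrite big_ord_recl /= bin0 subn0 mul1r.
have E3 : \sum_(i < r.+1) ('C(r, i.+1))%:R * f i.+1 * g (r - i)%N =
  \sum_(i < r) ('C(r, i.+1))%:R * f i.+1 * g (r - i.+1)%N.+1.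
  rewrite big_ord_recr /= bin_small // mul0r mul0r addr0.
  by apply: eq_bigr => i _; rewrite subnSK.
rewrite E1 E2 -E3; ring.
Qed.

Section Step.
Variable r : nat.
Hypothesis Hr : forall p1 p2 : fac,
  \sum_(phi <- FF p1 p2) aa (size phi) r = PP r (size p1) (size p2).

Lemma g1s p2 (p1 : fac) : \sum_(phi <- G1 p1 p2) aa (size phi) r.+1 =
  \sum_(i < r.+1) ('C(r, i))%:R * aa (size p1) i.+1 * aa (size p2) (r - i)%N.
Proof.
elim: p1 => [|a p1 IH].
  by rewrite G1_nil big_nil big1 // => i _; rewrite aa0r mulr0 mul0r.
rewrite G1_cons big_cat !big_map /=.
under eq_bigr do rewrite aaSS.
under [X in _ + X]eq_bigr do rewrite size_glue.
rewrite sumrB fsS Hr IH opprD addrA subrK /PP -sumrB.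
by apply: eq_bigr => i _; rewrite aaSS; ring.
Qed.

Lemma g2s p1 (p2 : fac) : \sum_(phi <- G2 p1 p2) aa (size phi) r.+1 =
  \sum_(i < r.+1) ('C(r, i))%:R * aa (size p1) i * aa (size p2) (r - i)%N.+1.
Proof.
elim: p2 => [|b p2 IH].
  by rewrite G2_nil big_nil big1 // => i _; rewrite aa0r mulr0.
rewrite G2_cons big_cat !big_map /=.
under eq_bigr do rewrite aaSS.
under [X in _ + X]eq_bigr do rewrite size_glue.
rewrite sumrB fsS Hr IH opprD addrA addrAC subrK /PP -sumrB.
apply: eq_bigr => i _; rewrite aaSS.
have -> : (r - i)%N.+1 = (r.+1 - i)%N by rewrite subSn // -ltnS.
ring.
Qed.

End Step.

Lemma fs_all r (p1 p2 : fac) :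
  \sum_(phi <- FF p1 p2) aa (size phi) r = PP r (size p1) (size p2).
Proof.
elim: r p1 p2 => [|r IH] p1 p2; first exact: fs0.
by rewrite fsS (g1s IH) (g2s IH) /PP pascal_sum.
Qed.

Lemma lag_sum (p1 p2 : fac) :
  \sum_(phi <- FF p1 p2) laguerre R (size phi) =
  laguerre R (size p1) * laguerre R (size p2).
Proof.
apply/polyP => j; rewrite coef_sum coefM.
under eq_bigr do rewrite coef_lag.
rewrite -mulr_suml fs_all /PP mulr_suml; apply: eq_bigr => i _.
rewrite !coef_lag.
have Hi : (i <= j)%N by rewrite -ltnS.
have F : forall n, (n`!)%:R != 0 :> R by move=> n; rewrite pnatr_eq0 -lt0n fact_gt0.
rewrite -[in X in _ / X](bin_fact Hi) !natrM.
have C : ('C(j, i))%:R != 0 :> R by rewrite pnatr_eq0 -lt0n bin_gt0.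
by field; rewrite C !F.
Qed.

End LagSum.

End M2.
Import M2.

Module M3.

Section Restr.
Variable L : choiceType.
Notation fac := (seq (seq L)).
Implicit Types (T : set L) (u a w : seq L) (phi psi : fac).

Lemma blocks_nonnil T u : blocks T u = head [::] (blocks T u) :: behead (blocks T u).
Proof. by case: u => [|x u] //=; case: ifP. Qed.

Lemma blocks_cat_in T a w : {in a, forall x, x \in T} ->
  blocks T (a ++ w) = (a ++ head [::] (blocks T w)) :: behead (blocks T w).
Proof.
elim: a => [|x a IH] Ha /=; first exact: blocks_nonnil.
rewrite Ha ?mem_head // IH //.
by move=> y ya; apply: Ha; rewrite in_cons ya orbT.
Qed.

Lemma runs_cat_out T a w : {in a, forall x, x \notin T} ->
  runs T (a ++ w) = runs T w.
Proof.
elim: a => [|x a IH] Ha //=.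
rewrite /runs /= (negbTE (Ha _ (mem_head _ _))) /=.
by apply: IH => y ya; apply: Ha; rewrite in_cons ya orbT.
Qed.

Lemma runs_cat_in T a w : a != [::] -> {in a, forall x, x \in T} ->
  (if w is d :: _ then d \notin T else true) ->
  runs T (a ++ w) = a :: runs T w.
Proof.
move=> an Ha Hw; rewrite /runs blocks_cat_in //.
have -> : head [::] (blocks T w) = [::].
  by case: w Hw => [|d w] //= /negbTE ->.
rewrite cats0 /= an; congr (_ :: _).
rewrite [in RHS]blocks_nonnil.
have -> : head [::] (blocks T w) = [::].
  by case: w Hw => [|d w] //= /negbTE ->.
by [].
Qed.

Lemma restr_cons T u phi : restr T (u :: phi) = runs T u ++ restr T phi.
Proof. by []. Qed.

Lemma runs_nil T : runs T [::] = [::].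
Proof. by []. Qed.

Definition starts (T : set L) phi :=
  if phi is (c :: _) :: _ then c \in T else false.

Section TwoSides.
Variables T T' : set L.
Hypothesis Hd : forall x, x \in T -> x \notin T'.

Lemma cons_restr a phi : a != [::] -> {in a, forall x, x \in T} ->
  restr T (a :: phi) = a :: restr T phi /\ restr T' (a :: phi) = restr T' phi.
Proof.
move=> an Ha; rewrite !restr_cons; split.
  by rewrite -[a]cats0 runs_cat_in // cats0.
by rewrite -[a]cats0 runs_cat_out // => x /Ha /Hd.
Qed.

Lemma glue_restr a psi : a != [::] -> {in a, forall x, x \in T} ->
  starts T' psi ->
  restr T (glue a psi) = a :: restr T psi /\ restr T' (glue a psi) = restr T' psi.
Proof.
case: psi => [|[|d w] psi] an Ha //= Hst.
rewrite !restr_cons; split.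
  by rewrite runs_cat_in //=; apply/negP => /Hd; rewrite Hst.
by rewrite runs_cat_out // => x /Ha /Hd.
Qed.

End TwoSides.

Lemma split_run T u : exists a w, u = a ++ w /\ {in a, forall x, x \in T} /\
  (if w is d :: _ then d \notin T else true).
Proof.
elim: u => [|x u [a [w [-> [Ha Hw]]]]]; first by exists [::], [::].
case xT: (x \in T).
  exists (x :: a), w; split => //; split => // y; rewrite in_cons => /orP[/eqP->//|].
  exact: Ha.
by exists [::], (x :: a ++ w); rewrite xT.
Qed.

End Restr.

End M3.
Import M3.

Module M4.
Local Open Scope classical_set_scope.

Section Fiber.
Variable L : choiceType.
Notation fac := (seq (seq L)).
Variables S1 S2 : set L.
Hypothesis disj : S1 `&` S2 = set0.
Let S := S1 `|` S2.

Lemma Hd12 x : x \in S1 -> x \notin S2.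
Proof.
move=> /set_mem x1; apply/negP => /set_mem x2.
by have : (S1 `&` S2) x by []; rewrite disj.
Qed.
Lemma Hd21 x : x \in S2 -> x \notin S1.
Proof. by move=> x2; apply/negP => /Hd12; rewrite x2. Qed.

Lemma catI (a w w' : seq L) : a ++ w = a ++ w' -> w = w'.
Proof. by elim: a => //= x a IH [] /IH. Qed.

Lemma factE (T : set L) a (p : fac) : is_fact_on T (a :: p) ->
  [/\ a != [::], {in a, forall x, x \in T} & is_fact_on T p].
Proof.
move=> [H1 H2]; split.
- exact: H1 (mem_head _ _).
- by move=> x xa; apply: mem_set; apply: H2 xa; rewrite mem_head.
- split=> u up; [apply: H1 | apply: H2]; by rewrite in_cons up orbT.
Qed.

Lemma fact_cons (T T0 : set L) a (p : fac) : a != [::] -> {in a, forall x, x \in T} ->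
  T `<=` T0 -> is_fact_on T0 p -> is_fact_on T0 (a :: p).
Proof.
move=> an Ha TT0 [H1 H2]; split=> u; rewrite in_cons => /orP[/eqP->//|up].
- exact: H1.
- by move=> x /Ha /set_mem /TT0.
- exact: H2.
Qed.

Lemma fact_glue (T T0 : set L) a (p : fac) : a != [::] -> {in a, forall x, x \in T} ->
  T `<=` T0 -> is_fact_on T0 p -> is_fact_on T0 (glue a p).
Proof.
case: p => [|w p] //= an Ha TT0 [H1 H2]; split=> u; rewrite in_cons => /orP[/eqP->|up].
- by case: a an Ha.
- by apply: H1; rewrite in_cons up orbT.
- move=> x; rewrite mem_cat => /orP[/Ha /set_mem /TT0//|xw].
  by apply: H2 xw; rewrite mem_head.
- by apply: H2; rewrite in_cons up orbT.
Qed.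


Lemma starts_nonnil (T : set L) (phi : fac) : starts T phi ->
  exists c w psi, phi = (c :: w) :: psi /\ c \in T.
Proof. by case: phi => [|[|c w] psi] //= H; exists c, w, psi. Qed.

Lemma step_gen (T T' : set L) (Hd : forall x, x \in T -> x \notin T') (HT : T `<=` S)
  a (F G : seq fac) q q' : a != [::] -> {in a, forall x, x \in T} ->
  (forall phi, phi \in F -> [/\ is_fact_on S phi, restr T phi = q & restr T' phi = q']) ->
  (forall phi, phi \in G -> [/\ is_fact_on S phi, restr T phi = q, restr T' phi = q'
                                 & starts T' phi]) ->
  uniq F -> uniq G ->
  (forall phi, phi \in map (cons a) F ++ map (glue a) G ->
     [/\ is_fact_on S phi, restr T phi = a :: q, restr T' phi = q' & starts T phi]) /\
  uniq (map (cons a) F ++ map (glue a) G).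
Proof.
move=> an Ha HF HG UF UG; split.
  move=> phi; rewrite mem_cat => /orP[/mapP[phi' Hphi' ->] | /mapP[psi Hpsi ->]].
    have [f r1 r2] := HF phi' Hphi'.
    have [e1 e2] := cons_restr Hd phi' an Ha.
    split.
    - exact: fact_cons an Ha HT f.
    - by rewrite e1 r1.
    - by rewrite e2 r2.
    - by case: a an Ha {e1 e2} => // x a _ Ha; apply: Ha; rewrite mem_head.
  have [f r1 r2 st] := HG psi Hpsi.
  have [e1 e2] := glue_restr Hd an Ha st.
  split.
  - exact: fact_glue an Ha HT f.
  - by rewrite e1 r1.
  - by rewrite e2 r2.
  - have [c [w [psi' [-> _]]]] := starts_nonnil st.
    by case: a an Ha {e1 e2} => // x a _ Ha /=; apply: Ha; rewrite mem_head.
rewrite cat_uniq map_inj_uniq; last by move=> x y [].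
rewrite map_inj_in_uniq ?UF ?UG /=; last first.
  move=> psi psi' /HG[_ _ _ /starts_nonnil[c [w [t [-> _]]]]].
  move=> /HG[_ _ _ /starts_nonnil[c' [w' [t' [-> _]]]]] /=.
  by case=> /catI -> ->.
rewrite andbT; apply/hasPn => x /mapP[psi /HG[_ _ _ st] ->]; apply/negP.
move=> /mapP[phi' _].
have [c [w [t [E _]]]] := starts_nonnil st; rewrite E /=.
case=> /(congr1 size); rewrite size_cat /= => /eqP.
by rewrite -[X in _ == X]addn0 eqn_add2l.
Qed.


Lemma fact_nil (T : set L) : is_fact_on T [::].
Proof. by split=> u; rewrite in_nil. Qed.

Lemma FF_from (p1 p2 : fac) :
  (forall phi, phi \in G1 p1 p2 ->
     [/\ is_fact_on S phi, restr S1 phi = p1, restr S2 phi = p2 & starts S1 phi]) ->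
  (forall phi, phi \in G2 p1 p2 ->
     [/\ is_fact_on S phi, restr S1 phi = p1, restr S2 phi = p2 & starts S2 phi]) ->
  uniq (G1 p1 p2) -> uniq (G2 p1 p2) ->
  (forall phi, phi \in FF p1 p2 ->
     [/\ is_fact_on S phi, restr S1 phi = p1 & restr S2 phi = p2]) /\ uniq (FF p1 p2).
Proof.
move=> H1 H2 U1 U2; rewrite FF_eq; split.
  move=> phi; rewrite !mem_cat => /orP[|/orP[/H1[]//|/H2[]//]].
  by case: p1 {H1 H2 U1 U2} => [|? ?]; case: p2 => [|? ?] //; rewrite inE => /eqP ->;
    split => //; exact: fact_nil.
have Hn : forall x, x \in G1 p1 p2 ++ G2 p1 p2 -> x != [::].
  move=> x; rewrite mem_cat => /orP[/H1[_ _ _ st]|/H2[_ _ _ st]];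
  by have [c [w [t [-> _]]]] := starts_nonnil st.
rewrite cat_uniq; apply/and3P; split.
- by case: p1 {H1 H2 U1 U2 Hn} => [|? ?]; case: p2 => [|? ?].
- apply/hasPn => x /Hn; case: p1 {H1 H2 U1 U2 Hn} => [|? ?]; case: p2 => [|? ?] //=.
  by rewrite inE; apply: contra => /eqP ->.
rewrite cat_uniq U1 U2 /= andbT.
apply/hasPn => x /H2[_ _ _ st2]; apply/negP => /H1[_ _ _ st1].
have [c [w [t [E c1]]]] := starts_nonnil st1.
by move: st2; rewrite E /= => c2; move: (Hd12 c1); rewrite c2.
Qed.

Lemma fwd n : forall p1 p2 : fac, (size p1 + size p2 <= n)%N ->
  is_fact_on S1 p1 -> is_fact_on S2 p2 ->
  [/\ (forall phi, phi \in G1 p1 p2 ->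
     [/\ is_fact_on S phi, restr S1 phi = p1, restr S2 phi = p2 & starts S1 phi]),
   (forall phi, phi \in G2 p1 p2 ->
     [/\ is_fact_on S phi, restr S1 phi = p1, restr S2 phi = p2 & starts S2 phi]),
   uniq (G1 p1 p2) & uniq (G2 p1 p2)].
Proof.
elim: n => [|n IH] p1 p2.
  by case: p1 => [|? ?]; case: p2 => [|? ?] //= _ _ _; rewrite G1_nil G2_nil.
move=> Hs f1 f2.
have HS1 : S1 `<=` S by move=> x h; left.
have HS2 : S2 `<=` S by move=> x h; right.
have G1p : (forall phi, phi \in G1 p1 p2 ->
     [/\ is_fact_on S phi, restr S1 phi = p1, restr S2 phi = p2 & starts S1 phi]) /\
     uniq (G1 p1 p2).
  case: p1 Hs f1 => [|a p1] Hs f1; first by rewrite G1_nil.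
  have [an Ha f1'] := factE f1.
  have Hs' : (size p1 + size p2 <= n)%N by move: Hs; rewrite /= addSn.
  have [H1 H2 U1 U2] := IH p1 p2 Hs' f1' f2.
  have [HF UF] := FF_from H1 H2 U1 U2.
  rewrite G1_cons; apply: (step_gen Hd12 HS1 an Ha) => //.
have G2p : (forall phi, phi \in G2 p1 p2 ->
     [/\ is_fact_on S phi, restr S1 phi = p1, restr S2 phi = p2 & starts S2 phi]) /\
     uniq (G2 p1 p2).
  move: G1p; case: p2 Hs f2 => [|b p2] Hs f2 G1p; first by rewrite G2_nil.
  have [bn Hb f2'] := factE f2.
  have Hs' : (size p1 + size p2 <= n)%N by move: Hs; rewrite /= addnS.
  have [H1 H2 U1 U2] := IH p1 p2 Hs' f1 f2'.
  have [HF UF] := FF_from H1 H2 U1 U2.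
  rewrite G2_cons.
  have [K U] := step_gen (T := S2) (T' := S1) Hd21 HS2 (q := p2) (q' := p1) bn Hb
    (F := FF p1 p2) (G := G1 p1 p2)
    ltac:(by move=> phi /HF[]) ltac:(by move=> phi /H1[]) UF U1.
  by split => // phi /K[].
by case: G1p => A1 B1; case: G2p => A2 B2; split.
Qed.


Lemma bwd_gen (T T' : set L) (Hd : forall x, x \in T -> x \notin T')
  (HTT' : forall x, x \in S -> x \notin T -> x \in T') (phi : fac) :
  is_fact_on S phi -> starts T phi ->
  exists a, [/\ a != [::], {in a, forall x, x \in T} &
   (exists phi', [/\ phi = a :: phi', restr T phi = a :: restr T phi',
      restr T' phi = restr T' phi' & is_fact_on S phi']) \/
   (exists psi, [/\ phi = glue a psi, starts T' psi,
      restr T phi = a :: restr T psi, restr T' phi = restr T' psi & is_fact_on S psi])].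
Proof.
case: phi => [|u phi'] // f st.
have [un Hu f'] := factE f.
have [a [w [Eu [Ha Hw]]]] := split_run T u.
have an : a != [::].
  apply/negP => /eqP a0; move: Eu Hw; rewrite a0 /= => <-.
  by case: u st {un Hu f} => [|c u] //= ->.
exists a; split => //.
case: w Eu Hw => [|d w] Eu Hw.
  rewrite cats0 in Eu; subst u; left; exists phi'.
  by have [e1 e2] := cons_restr Hd phi' an Ha; split.
right; exists ((d :: w) :: phi').
have dT' : d \in T'.
  by apply: HTT' => //; apply: Hu; rewrite Eu mem_cat mem_head orbT.
have Eg : u :: phi' = glue a ((d :: w) :: phi') by rewrite Eu.
have [e1 e2] := glue_restr Hd (psi := (d :: w) :: phi') an Ha dT'.
rewrite Eg; split => //.
apply: (fact_cons (T := S)) => // x xw; apply: Hu.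
by rewrite Eu mem_cat xw orbT.
Qed.

Lemma memS (phi : fac) u x : is_fact_on S phi -> u \in phi -> x \in u ->
  (x \in S1) || (x \in S2).
Proof. by move=> [_ H] up xu; rewrite -in_setU; apply: mem_set; apply: H xu. Qed.

Lemma bwd n : forall p1 p2 : fac, (size p1 + size p2 <= n)%N ->
  forall phi, is_fact_on S phi -> restr S1 phi = p1 -> restr S2 phi = p2 ->
  [/\ phi \in FF p1 p2, (starts S1 phi -> phi \in G1 p1 p2) &
      (starts S2 phi -> phi \in G2 p1 p2)].
Proof.
have H12 : forall x, x \in S -> x \notin S1 -> x \in S2.
  by move=> x; rewrite in_setU => /orP[->|].
have H21 : forall x, x \in S -> x \notin S2 -> x \in S1.
  by move=> x; rewrite in_setU => /orP[|->].
elim: n => [|n IH] p1 p2 Hs phi f r1 r2.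
  have [E1 E2] : p1 = [::] /\ p2 = [::] by case: p1 p2 Hs {r1 r2} => [|? ?] [|? ?].
  move: r1 r2; rewrite E1 E2 => r1 r2; clear E1 E2.
  case: phi f r1 r2 => [|u phi] f r1 r2.
    by split => //; rewrite FF_eq inE.
  have [un _ _] := factE f.
  case: u un f r1 r2 => [|c u] // _ f r1 r2.
  have := memS f (mem_head _ _) (mem_head _ _).
  case/orP => cS.
    have [a [an Ha [[phi' [E e1 e2 _]]|[psi [E _ e1 e2 _]]]]] :=
      bwd_gen Hd12 H12 f (cS : starts S1 ((c :: u) :: phi));
    by move: r1; rewrite e1.
  have [a [an Ha [[phi' [E e1 e2 _]]|[psi [E _ e1 e2 _]]]]] :=
      bwd_gen Hd21 H21 f (cS : starts S2 ((c :: u) :: phi));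
  by move: r2; rewrite e1.
have G1m : starts S1 phi -> phi \in G1 p1 p2.
  move=> st.
  have [a [an Ha [[phi' [E e1 e2 f']]|[psi [E st' e1 e2 f']]]]] := bwd_gen Hd12 H12 f st.
    move: r1 r2; rewrite e1 e2 => r1 r2; subst p1 p2.
    have Hs' : (size (restr S1 phi') + size (restr S2 phi') <= n)%N by move: Hs; rewrite /= addSn.
    have [m _ _] := IH _ _ Hs' phi' f' erefl erefl.
    by rewrite G1_cons mem_cat E map_f.
  move: r1 r2; rewrite e1 e2 => r1 r2; subst p1 p2.
  have Hs' : (size (restr S1 psi) + size (restr S2 psi) <= n)%N by move: Hs; rewrite /= addSn.
  have [_ _ m] := IH _ _ Hs' psi f' erefl erefl.
  by rewrite G1_cons mem_cat E map_f ?orbT // m.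
have G2m : starts S2 phi -> phi \in G2 p1 p2.
  move=> st.
  have [a [an Ha [[phi' [E e1 e2 f']]|[psi [E st' e1 e2 f']]]]] := bwd_gen Hd21 H21 f st.
    move: r1 r2; rewrite e1 e2 => r1 r2; subst p1 p2.
    have Hs' : (size (restr S1 phi') + size (restr S2 phi') <= n)%N by move: Hs; rewrite /= addnS.
    have [m _ _] := IH _ _ Hs' phi' f' erefl erefl.
    by rewrite G2_cons mem_cat E map_f.
  move: r1 r2; rewrite e1 e2 => r1 r2; subst p1 p2.
  have Hs' : (size (restr S1 psi) + size (restr S2 psi) <= n)%N by move: Hs; rewrite /= addnS.
  have [_ m _] := IH _ _ Hs' psi f' erefl erefl.
  by rewrite G2_cons mem_cat E map_f ?orbT // m.
split => //.
rewrite FF_eq !mem_cat.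
case: phi f r1 r2 G1m G2m => [|u phi] f r1 r2 G1m G2m.
  by subst p1 p2.
have [un _ _] := factE f.
case: u un f r1 r2 G1m G2m => [|c u] // _ f r1 r2 G1m G2m.
have := memS f (mem_head _ _) (mem_head _ _).
by case/orP => cS; [rewrite G1m ?orbT | rewrite G2m ?orbT].
Qed.

End Fiber.

End M4.
Import M4.

Module M5.
Local Open Scope classical_set_scope.

Lemma finite_D (m : mono) : finite_set [set ab : mono * mono | msetD ab.1 ab.2 = m].
Proof.
pose Sm := finsupp m.
pose N := size (enum_mset m).
pose g (f : {ffun Sm -> 'I_N.+1}) : mono := [fsfun x : Sm => nat_of_ord (f x)].
pose P := [set a : mono | forall x, (a x <= m x)%N].
have HP : P `<=` g @` setT.
  move=> a Pa; exists [ffun x : Sm => inord (a (val x))] => //.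
  apply/msetP => y; rewrite fsfun_ffun; case: insubP => [u uS <-|yS] /=.
    rewrite ffunE inordK // ltnS (leq_trans (Pa _)) //.
    by rewrite -count_mem_mset count_size.
  have : m y = 0%N by apply/eqP; rewrite mset_eq0 -msuppE.
  by move: (Pa y) => /[swap] -> ; rewrite leqn0 => /eqP.
have fP : finite_set P.
  exact: (sub_finite_set HP (finite_image g finite_finset)).
apply: (sub_finite_set (B := P `*` P)); last exact: finite_setX.
move=> [a b] /= E; split=> x /=; rewrite -E msetE2.
  exact: leq_addr.
exact: leq_addl.
Qed.

End M5.
Import M5.
Import Order.TTheory GRing.Theory Num.Theory.
Local Open Scope classical_set_scope.
Local Open Scope ring_scope.

Lemma fsum_list (R : realType) (T : choiceType) (A : set T) (r : seq T) (F : T -> R) :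
  uniq r -> (forall x, x \in r -> A x) -> (forall x, A x -> x \notin r -> F x = 0) ->
  \sum_(x \in A) F x = \sum_(x <- r) F x.
Proof.
move=> ur rA F0.
have sub : [set` r] `<=` A by move=> x /= /rA.
rewrite (fsbigE r) //.
rewrite -big_filter; congr bigop; apply/all_filterP/allP => x xr.
exact: mem_set (rA x xr).
Qed.

Lemma setUD_disj (L : choiceType) (S1 S2 : set L) : S1 `&` S2 = set0 ->
  (S1 `|` S2) `\` S1 = S2.
Proof.
move=> disj; apply/seteqP; split => x /=.
  by case=> [[//|//] ].
move=> x2; split; first by right.
by move=> x1; have : (S1 `&` S2) x by []; rewrite disj.
Qed.

Lemma swap4 (R : realType) (I1 I2 I3 I4 : Type) (r1 : seq I1) (r2 : seq I2)
  (r3 : seq I3) (r4 : seq I4) (F : I1 -> I2 -> I3 -> I4 -> R) :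
  \sum_(a <- r1) \sum_(b <- r2) \sum_(c <- r3) \sum_(d <- r4) F a b c d =
  \sum_(c <- r3) \sum_(d <- r4) \sum_(a <- r1) \sum_(b <- r2) F a b c d.
Proof.
under eq_bigr => a _ do rewrite exchange_big.
under eq_bigr => a _ do under eq_bigr => c _ do rewrite exchange_big.
rewrite exchange_big.
by under eq_bigr => c _ do rewrite exchange_big.
Qed.

Lemma uniq_flatten_map (T U : eqType) (f : T -> seq U) (pr : U -> T) (s : seq T) :
  uniq s -> (forall x, x \in s -> uniq (f x)) ->
  (forall x y, x \in s -> y \in f x -> pr y = x) -> uniq (flatten (map f s)).
Proof.
elim: s => [|x s IH] //= /andP[xs us] Uf Pr.
rewrite cat_uniq Uf ?mem_head //= IH //; last first.
- by move=> z y zs; apply: Pr; rewrite in_cons zs orbT.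
- by move=> z zs; apply: Uf; rewrite in_cons zs orbT.
rewrite andbT; apply/hasPn => y /flatten_mapP[x' x's yx']; apply/negP => yx.
have e1 := Pr x y (mem_head _ _) yx.
have e2 : pr y = x' by apply: Pr; rewrite ?in_cons ?x's ?orbT.
by move: xs; rewrite -e1 e2 x's.
Qed.

Theorem theorem2p7 (R : realType) (L : choiceType) (S1 S2 : set L)
    (A1 A2 : set (seq (seq L))) (w : seq (seq L) -> mono -> R) :
  S1 `&` S2 = set0 ->
  (forall phi, A1 phi -> is_fact_on S1 phi) ->
  (forall phi, A2 phi -> is_fact_on S2 phi) ->
  is_weight (S1 `|` S2) (fstar S1 S2 A1 A2) w ->
  is_weight S1 A1 w ->
  is_weight S2 A2 w ->
  lag_wd (fstar S1 S2 A1 A2) w ->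
  lag_wd A1 w ->
  lag_wd A2 w ->
  lag_series (fstar S1 S2 A1 A2) w = smul (lag_series A1 w) (lag_series A2 w).
Proof.
move=> disj f1 f2 wA _ _ wdA wd1 wd2.
apply/funext => j; apply/funext => m.
set A := fstar S1 S2 A1 A2.
pose l n := laguerre R n.
pose D := [set ab : mono * mono | msetD ab.1 ab.2 = m].
have finD : finite_set D by exact: finite_D.
pose Dl := fset_set D.
pose H (p : seq (seq L) * seq (seq L)) :=
  \sum_(ab <- Dl) \sum_(i < j.+1)
     (w p.1 ab.1 * (l (size p.1))`_i) * (w p.2 ab.2 * (l (size p.2))`_(j - i)%N).
have H1 : forall p, H p = xmul (w p.1) (w p.2) m * (l (size p.1) * l (size p.2))`_j.
  move=> p; rewrite /xmul (fsbig_finite _ _ finD) -/Dl coefM big_distrl /=.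
  apply: eq_bigr => ab _; rewrite big_distrr /=; apply: eq_bigr => i _.
  by rewrite mulrACA.
have wsplit : forall phi, A phi ->
    w phi = xmul (w (restr S1 phi)) (w (restr S2 phi)).
  move=> phi Aphi; have [_ W] := wA phi Aphi.
  have [_ _ E] := W S1 (fun x h => or_introl h).
  by rewrite E setUD_disj.
have fibH : forall p, A1 p.1 -> A2 p.2 ->
    \sum_(phi <- FF p.1 p.2) lag_term w phi j m = H p.
  move=> [p1 p2] /= a1 a2.
  have [G1p G2p U1 U2] := fwd disj (leqnn _) (f1 _ a1) (f2 _ a2).
  have [HF UF] := FF_from disj G1p G2p U1 U2.
  rewrite H1 /= -lag_sum coef_sum mulr_sumr big_seq [RHS]big_seq.
  apply: eq_bigr => phi /HF [fphi r1 r2].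
  rewrite /lag_term wsplit ?r1 ?r2 //.
  by split => //; rewrite ?r1 ?r2.
have Dl_D : forall ab, ab \in Dl -> D ab.
  by move=> ab; rewrite in_fset_set // => /set_mem.
have HRHS : smul (lag_series A1 w) (lag_series A2 w) j m = \sum_(p \in A1 `*` A2) H p.
  pose K := [set k : nat * (mono * mono) | (k.1 < j.+1)%N /\ D k.2].
  have finK : finite_set K.
    apply: (sub_finite_set (B := `I_(j.+1) `*` D)); last exact/finite_setX/finD/finite_II.
    by move=> k [k1 k2]; split.
  pose Z1 := \bigcup_(k in K) (A1 `&` [set phi | lag_term w phi k.1 k.2.1 != 0]).
  pose Z2 := \bigcup_(k in K) (A2 `&` [set phi | lag_term w phi (j - k.1)%N k.2.2 != 0]).
  have finZ1 : finite_set Z1 by apply: bigcup_finite => // k _; exact: wd1.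
  have finZ2 : finite_set Z2 by apply: bigcup_finite => // k _; exact: wd2.
  pose Z1l := fset_set Z1.
  pose Z2l := fset_set Z2.
  have Z1P : forall phi, phi \in Z1l -> Z1 phi by move=> phi; rewrite in_fset_set // => /set_mem.
  have Z2P : forall phi, phi \in Z2l -> Z2 phi by move=> phi; rewrite in_fset_set // => /set_mem.
  have Z1N : forall phi k, K k -> A1 phi -> phi \notin Z1l -> lag_term w phi k.1 k.2.1 = 0.
    move=> phi k Kk A1phi; apply: contraNeq => nz.
    by rewrite in_fset_set //; apply/mem_set; exists k => //; split.
  have Z2N : forall phi k, K k -> A2 phi -> phi \notin Z2l ->
      lag_term w phi (j - k.1)%N k.2.2 = 0.
    move=> phi k Kk A2phi; apply: contraNeq => nz.
    by rewrite in_fset_set //; apply/mem_set; exists k => //; split.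
  rewrite /smul /lag_series.
  have E1 : forall i : 'I_j.+1, forall ab, ab \in Dl ->
     \sum_(phi \in A1) lag_term w phi i ab.1 = \sum_(phi <- Z1l) lag_term w phi i ab.1.
    move=> i ab abD; apply: fsum_list => //.
      by move=> phi /Z1P [k _ []].
    by move=> phi A1phi nZ; exact: (Z1N phi (nat_of_ord i, ab) (conj (ltn_ord i) (Dl_D _ abD))).
  have E2 : forall i : 'I_j.+1, forall ab, ab \in Dl ->
     \sum_(phi \in A2) lag_term w phi (j - i)%N ab.2 =
     \sum_(phi <- Z2l) lag_term w phi (j - i)%N ab.2.
    move=> i ab abD; apply: fsum_list => //.
      by move=> phi /Z2P [k _ []].
    by move=> phi A2phi nZ; exact: (Z2N phi (nat_of_ord i, ab) (conj (ltn_ord i) (Dl_D _ abD))).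
  transitivity (\sum_(i < j.+1) \sum_(ab <- Dl) \sum_(phi1 <- Z1l) \sum_(phi2 <- Z2l)
      lag_term w phi1 i ab.1 * lag_term w phi2 (j - i)%N ab.2).
    apply: eq_bigr => i _; rewrite (fsbig_finite _ _ finD) -/Dl big_seq [RHS]big_seq.
    by apply: eq_bigr => ab abD; rewrite E1 // E2 // big_distrlr.
  rewrite swap4.
  transitivity (\sum_(p <- [seq (x, y) | x <- Z1l, y <- Z2l]) H p).
    rewrite big_allpairs; apply: eq_bigr => phi1 _; apply: eq_bigr => phi2 _.
    by rewrite /H /= exchange_big.
  symmetry; apply: fsum_list.
  - apply: allpairs_uniq; try exact: fset_uniq.
    by move=> [? ?] [? ?] _ _ [-> ->].
  - move=> p /allpairsP [[x y] [xZ yZ ->]] /=.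
    have [k _ [? _]] := Z1P _ xZ; have [k' _ [? _]] := Z2P _ yZ; by split.
  - move=> [p1 p2] [/= A1p A2p] nP.
    have [n1|n2] : p1 \notin Z1l \/ p2 \notin Z2l.
      case: (boolP (p1 \in Z1l)) => h1; last by left.
      case: (boolP (p2 \in Z2l)) => h2; last by right.
      by move: nP; rewrite allpairs_f.
    + rewrite /H big_seq big1 // => ab abD; rewrite big1 // => i _ /=.
      have := Z1N p1 (nat_of_ord i, ab) (conj (ltn_ord i) (Dl_D _ abD)) A1p n1.
      by rewrite /lag_term /= => ->; rewrite mul0r.
    + rewrite /H big_seq big1 // => ab abD; rewrite big1 // => i _ /=.
      have := Z2N p2 (nat_of_ord i, ab) (conj (ltn_ord i) (Dl_D _ abD)) A2p n2.
      by rewrite /lag_term /= => ->; rewrite mulr0.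

rewrite HRHS /lag_series.
pose pr (phi : seq (seq L)) := (restr S1 phi, restr S2 phi).
have finZ := wdA j m.
pose Zl := fset_set (A `&` [set phi | lag_term w phi j m != 0]).
pose Pl := undup (map pr Zl).
have ZP : forall phi, phi \in Zl -> A phi.
  by move=> phi; rewrite in_fset_set // => /set_mem [].
have ZN : forall phi, A phi -> lag_term w phi j m != 0 -> phi \in Zl.
  by move=> phi Aphi nz; rewrite in_fset_set //; apply/mem_set; split.
have Apr : forall phi, A phi -> A1 (pr phi).1 /\ A2 (pr phi).2.
  by move=> phi [_ [a1 a2]].
have PlA : forall p, p \in Pl -> A1 p.1 /\ A2 p.2.
  by move=> p; rewrite mem_undup => /mapP [phi /ZP /Apr + ->].
have Hmem : forall p, A1 p.1 -> A2 p.2 ->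
   uniq (FF p.1 p.2) /\ forall phi, phi \in FF p.1 p.2 -> A phi /\ pr phi = p.
  move=> [p1 p2] /= a1 a2.
  have [G1p G2p U1 U2] := fwd disj (leqnn _) (f1 _ a1) (f2 _ a2).
  have [HF UF] := FF_from disj G1p G2p U1 U2.
  split => // phi /HF [fphi r1 r2]; split; last by rewrite /pr r1 r2.
  by split => //; rewrite ?r1 ?r2.
transitivity (\sum_(p <- Pl) H p); last first.
  symmetry; apply: fsum_list.
  - exact: undup_uniq.
  - by move=> p /PlA [].
  move=> [p1 p2] [/= a1 a2] nP.
  have [_ Hm] := Hmem (p1, p2) a1 a2.
  rewrite -fibH // big_seq big1 // => phi /Hm [Aphi prE].
  apply/eqP; apply: contraNT nP => nz.
  by rewrite mem_undup -prE map_f // ZN.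
transitivity (\sum_(p <- Pl) \sum_(phi <- FF p.1 p.2) lag_term w phi j m); last first.
  rewrite big_seq [RHS]big_seq; apply: eq_bigr => p /PlA [a1 a2].
  exact: fibH.
rewrite -(big_map (fun p => FF p.1 p.2) xpredT (fun s => \sum_(phi <- s) lag_term w phi j m)) -big_flatten /=.
apply: fsum_list.
- apply: (uniq_flatten_map (pr := pr)).
  + exact: undup_uniq.
  + by move=> p /PlA [a1 a2]; have [] := Hmem p a1 a2.
  + by move=> p phi /PlA [a1 a2]; have [_ Hm] := Hmem p a1 a2; move=> /Hm [].
- move=> phi /flatten_mapP [p /PlA [a1 a2]].
  by have [_ Hm] := Hmem p a1 a2; move=> /Hm [].
move=> phi Aphi nF; apply/eqP; apply: contraNT nF => nz.
apply/flatten_mapP; exists (pr phi).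
  by rewrite mem_undup map_f // ZN.
have [fphi _] := Aphi.
have [HH _ _] := bwd disj (leqnn _) fphi erefl erefl.
exact: HH.
Qed.
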